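(* Let $M$ be a $\lambda\mu$-term. If $\Gamma \vdash M : \delta \mid \Delta$ is derivable in the intersection type system described in the context, for some basis $\Gamma$, name context $\Delta$ and type $\delta \in \mathcal{T}_D$, then $M$ is strongly normalising.
   Context: $\lambda\mu$-calculus (Parigot). Fix disjoint denumerable sets of term variables $x,y,\dots$ and names $\alpha,\beta,\dots$. Terms and commands: $M,N ::= x \mid \lambda x.M \mid MN \mid \mu\alpha.C$ and $C ::= [\alpha]M$; $\lambda$ binds $x$, $\mu$ binds $\alpha$; terms are taken up to renaming of bound variables/names, with bound and free variables/names assumed distinct. $M[N/x]$ is capture-avoiding substitution. Structural substitution $T[\alpha \Leftarrow L]$ ($T$ a term or command): $([\alpha]M)[\alpha\Leftarrow L] = [\alpha](M[\alpha\Leftarrow L])L$; $([\beta]M)[\alpha\Leftarrow L]=[\beta](M[\alpha\Leftarrow L])$ if $\beta\neq\alpha$; $(\mu\beta.C)[\alpha\Leftarrow L]=\mu\beta.(C[\alpha\Leftarrow L])$; $x[\alpha\Leftarrow L]=x$; $(\lambda x.M)[\alpha\Leftarrow L]=\lambda x.(M[\alpha\Leftarrow L])$; $(MN)[\alpha\Leftarrow L]=(M[\alpha\Leftarrow L])(N[\alpha\Leftarrow L])$. Reduction $\to$ is the compatible closure of $(\lambda x.M)N \to M[N/x]$ and $(\mu\beta.C)N \to \mu\beta.(C[\beta\Leftarrow N])$. A term is strongly normalising if it admits no infinite reduction sequence. Types. With a single type constant $\nu$ and a symbol $\omega$ (which is not itself a type): $\mathcal{T}_D:\ \delta ::= \nu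 \mid \omega\to\nu \mid \kappa\to\nu \mid \delta\wedge\delta$; $\mathcal{T}_C:\ \kappa ::= \delta\times\omega \mid \delta\times\kappa \mid \kappa\wedge\kappa$ ($\times$ associates to the right). The relations $\le$ on $\mathcal{T}_D$ and on $\mathcal{T}_C$ are the least preorders such that: $\sigma\wedge\tau\le\sigma$; $\sigma\wedge\tau\le\tau$; $\nu\le\omega\to\nu$; $\omega\to\nu\le\nu$; $\delta_1\times\delta_2\times\omega\le\delta_1\times\omega$; $(\delta_1\times\omega)\wedge(\delta_2\times\kappa)\le(\delta_1\wedge\delta_2)\times\kappa$; $(\delta_1\times\kappa_1)\wedge(\delta_2\times\kappa_2)\le(\delta_1\wedge\delta_2)\times(\kappa_1\wedge\kappa_2)$; if $\delta_1\le\delta_2$ then $\delta_1\times\omega\le\delta_2\times\omega$; if $\delta_1\le\delta_2$ and $\kappa_1\le\kappa_2$ then $\delta_1\times\kappa_1\le\delta_2\times\kappa_2$; if $\sigma\le\tau_1$ and $\sigma\le\tau_2$ then $\sigma\le\tau_1\wedge\tau_2$; if $\kappa_2\le\kappa_1$ then $\kappa_1\to\nu\le\kappa_2\to\nu$. Typing. A basis $\Gamma$ is a finite map from term variables to $\mathcal{T}_D$, a name context $\Delta$ a finite map from names to $\mathcal{T}_C$; judgements are $\Gamma\vdash M:\delta\mid\Delta$, with the convention that variables of $\Gamma$ and names of $\Delta$ do not occur bound in $M$. Rules: (ax) $\Gamma,x{:}\delta\vdash x:\delta\mid\Delta$; (abs) from $\Gamma,x{:}\delta\vdash M:\kappa\to\nu\mid\Delta$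 infer $\Gamma\vdash\lambda x.M:\delta\times\kappa\to\nu\mid\Delta$; (app) from $\Gamma\vdash M:\delta\times\kappa\to\nu\mid\Delta$ and $\Gamma\vdash N:\delta\mid\Delta$ infer $\Gamma\vdash MN:\kappa\to\nu\mid\Delta$ (in (abs) and (app), $\kappa$ is either in $\mathcal{T}_C$ or is $\omega$); ($\mu$) from $\Gamma\vdash M:\kappa'\to\nu\mid\alpha{:}\kappa,\beta{:}\kappa',\Delta$ infer $\Gamma\vdash\mu\alpha.[\beta]M:\kappa\to\nu\mid\beta{:}\kappa',\Delta$ (for $\beta\ne\alpha$), and from $\Gamma\vdash M:\kappa\to\nu\mid\alpha{:}\kappa,\Delta$ infer $\Gamma\vdash\mu\alpha.[\alpha]M:\kappa\to\nu\mid\Delta$; ($\le$) from $\Gamma\vdash M:\delta\mid\Delta$ and $\delta\le\delta'$ infer $\Gamma\vdash M:\delta'\mid\Delta$; ($\wedge$) from $\Gamma\vdash M:\delta\mid\Delta$ and $\Gamma\vdash M:\delta'\mid\Delta$ infer $\Gamma\vdash M:\delta\wedge\delta'\mid\Delta$. *)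

(* Defs.v *)
(* lambda-mu calculus with de Bruijn indices (terms up to
   alpha-conversion), separate index spaces for term variables and names. *)
From Stdlib Require Import List Arith.
Import ListNotations.

(* Since every command has the form [b]M and commands only occur under mu,
   the term  mu alpha.[beta]M  is represented as  Mu b M , where alpha is the
   name index 0 inside, and b is the (de Bruijn) name index of beta inside the
   binder (b = 0 means beta = alpha). *)
Inductive term : Type :=
| Var : nat -> term
| Lam : term -> term
| App : term -> term -> term
| Mu  : nat -> term -> term.

Fixpoint lift_t (c : nat) (M : term) : term :=
  match M with
  | Var x => if c <=? x then Var (S x) else Var x
  | Lam P => Lam (lift_t (S c) P)
  | App P Q => App (lift_t c P) (lift_t c Q)
  | Mu b P => Mu b (lift_t c P)
  end.

Fixpoint lift_n (c : nat) (M : term) : term :=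
  match M with
  | Var x => Var x
  | Lam P => Lam (lift_n c P)
  | App P Q => App (lift_n c P) (lift_n c Q)
  | Mu b P => Mu (if S c <=? b then S b else b) (lift_n (S c) P)
  end.

Fixpoint subst (j : nat) (N : term) (M : term) : term :=
  match M with
  | Var x => if x =? j then N else if j <? x then Var (pred x) else Var x
  | Lam P => Lam (subst (S j) (lift_t 0 N) P)
  | App P Q => App (subst j N P) (subst j N Q)
  | Mu b P => Mu b (subst j (lift_n 0 N) P)
  end.

Fixpoint ssub (a : nat) (N : term) (M : term) : term :=
  match M with
  | Var x => Var x
  | Lam P => Lam (ssub a (lift_t 0 N) P)
  | App P Q => App (ssub a N P) (ssub a N Q)
  | Mu b P =>
      let N' := lift_n 0 N in
      let P' := ssub (S a) N' P in
      if b =? S a then Mu b (App P' N') else Mu b P'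
  end.

Inductive step : term -> term -> Prop :=
| step_beta : forall M N, step (App (Lam M) N) (subst 0 N M)
| step_mu : forall b P N,
    let N' := lift_n 0 N in
    let P' := ssub 0 N' P in
    step (App (Mu b P) N) (Mu b (if b =? 0 then App P' N' else P'))
| step_lam : forall M M', step M M' -> step (Lam M) (Lam M')
| step_appl : forall M M' N, step M M' -> step (App M N) (App M' N)
| step_appr : forall M N N', step N N' -> step (App M N) (App M N')
| step_mu_body : forall b M M', step M M' -> step (Mu b M) (Mu b M').

Definition SN (M : term) : Prop := Acc (fun N M => step M N) M.

(* Types. T_D:  nu | omega -> nu | kappa -> nu | delta /\ delta
          T_C:  delta x omega | delta x kappa | kappa /\ kappa *)
Inductive dty : Type :=
| Nu : dty
| ArrO : dty
| Arr : cty -> dty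
| DMeet : dty -> dty -> dty
with cty : Type :=
| PairO : dty -> cty
| Pair : dty -> cty -> cty
| CMeet : cty -> cty -> cty.

Inductive dle : dty -> dty -> Prop :=
| dle_refl : forall d, dle d d
| dle_trans : forall d1 d2 d3, dle d1 d2 -> dle d2 d3 -> dle d1 d3
| dle_meet_l : forall d1 d2, dle (DMeet d1 d2) d1
| dle_meet_r : forall d1 d2, dle (DMeet d1 d2) d2
| dle_nu_arrO : dle Nu ArrO
| dle_arrO_nu : dle ArrO Nu
| dle_glb : forall s t1 t2, dle s t1 -> dle s t2 -> dle s (DMeet t1 t2)
| dle_arr : forall k1 k2, cle k2 k1 -> dle (Arr k1) (Arr k2)
with cle : cty -> cty -> Prop :=
| cle_refl : forall k, cle k k
| cle_trans : forall k1 k2 k3, cle k1 k2 -> cle k2 k3 -> cle k1 k3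
| cle_meet_l : forall k1 k2, cle (CMeet k1 k2) k1
| cle_meet_r : forall k1 k2, cle (CMeet k1 k2) k2
| cle_drop : forall d1 d2, cle (Pair d1 (PairO d2)) (PairO d1)
| cle_distO : forall d1 d2 k,
    cle (CMeet (PairO d1) (Pair d2 k)) (Pair (DMeet d1 d2) k)
| cle_dist : forall d1 d2 k1 k2,
    cle (CMeet (Pair d1 k1) (Pair d2 k2)) (Pair (DMeet d1 d2) (CMeet k1 k2))
| cle_pairO : forall d1 d2, dle d1 d2 -> cle (PairO d1) (PairO d2)
| cle_pair : forall d1 d2 k1 k2, dle d1 d2 -> cle k1 k2 ->
    cle (Pair d1 k1) (Pair d2 k2)
| cle_glb : forall s t1 t2, cle s t1 -> cle s t2 -> cle s (CMeet t1 t2).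

(* Typing  Gamma |- M : delta | Delta.  Gamma (resp. Delta) is a finite map
   whose domain is an initial segment of the de Bruijn term-variable
   (resp. name) indices. *)
Inductive typed : list dty -> term -> dty -> list cty -> Prop :=
| t_ax : forall G D x d, nth_error G x = Some d -> typed G (Var x) d D
| t_abs : forall G D d k M,
    typed (d :: G) M (Arr k) D -> typed G (Lam M) (Arr (Pair d k)) D
| t_absO : forall G D d M,
    typed (d :: G) M ArrO D -> typed G (Lam M) (Arr (PairO d)) D
| t_app : forall G D d k M N,
    typed G M (Arr (Pair d k)) D -> typed G N d D -> typed G (App M N) (Arr k) D
| t_appO : forall G D d M N,
    typed G M (Arr (PairO d)) D -> typed G N d D -> typed G (App M N) ArrO D
| t_mu : forall G D b k k' M,
    nth_error D b = Some k' ->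
    typed G M (Arr k') (k :: D) -> typed G (Mu (S b) M) (Arr k) D
| t_mu_self : forall G D k M,
    typed G M (Arr k) (k :: D) -> typed G (Mu 0 M) (Arr k) D
| t_le : forall G D M d d', typed G M d D -> dle d d' -> typed G M d' D
| t_meet : forall G D M d d',
    typed G M d D -> typed G M d' D -> typed G M (DMeet d d') D.

(* Main.v *)
Require Import Defs.
From Stdlib Require Import List Arith Lia Relations Transitive_Closure.
Import ListNotations.

Definition apps (M : term) (s : list term) : term := fold_left App s M.

Definition upS (σ : nat -> term) : nat -> term :=
  fun x => match x with 0 => Var 0 | S n => lift_t 0 (σ n) end.
Definition upNs (σ : nat -> term) : nat -> term := fun x => lift_n 0 (σ x).
Definition upT (θ : nat -> nat) : nat -> nat :=
  fun n => match n with 0 => 0 | S n => S (θ n) end.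
Definition liftK (τ : nat -> list term) : nat -> list term :=
  fun n => map (lift_t 0) (τ n).
Definition upK (τ : nat -> list term) : nat -> list term :=
  fun n => match n with 0 => [] | S n => map (lift_n 0) (τ n) end.

Fixpoint inst (σ : nat -> term) (θ : nat -> nat) (τ : nat -> list term) (M : term)
  : term :=
  match M with
  | Var x => σ x
  | Lam P => Lam (inst (upS σ) θ (liftK τ) P)
  | App P Q => App (inst σ θ τ P) (inst σ θ τ Q)
  | Mu b P => Mu (upT θ b) (apps (inst (upNs σ) (upT θ) (upK τ) P) (upK τ b))
  end.

Lemma apps_app : forall s t M, apps M (s ++ t) = apps (apps M s) t.
Proof. intros; unfold apps; apply fold_left_app. Qed.

Lemma apps_snoc : forall s x M, apps M (s ++ [x]) = App (apps M s) x.
Proof. intros; rewrite apps_app; reflexivity. Qed.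

Lemma inst_apps : forall s σ θ τ M,
  inst σ θ τ (apps M s) = apps (inst σ θ τ M) (map (inst σ θ τ) s).
Proof. induction s; intros; [reflexivity | exact (IHs σ θ τ (App M a))]. Qed.

Lemma inst_ext : forall M σ σ' θ θ' τ τ',
  (forall x, σ x = σ' x) -> (forall n, θ n = θ' n) -> (forall n, τ n = τ' n) ->
  inst σ θ τ M = inst σ' θ' τ' M.
Proof.
  induction M; intros σ σ' θ θ' τ τ' H1 H2 H3; simpl.
  - apply H1.
  - f_equal. apply IHM.
    + intros [|x]; simpl; auto. rewrite H1; auto.
    + auto.
    + intros; unfold liftK; rewrite H3; auto.
  - f_equal; auto.
  - assert (E1 : upT θ n = upT θ' n) by (destruct n; simpl; auto).
    assert (E2 : forall n, upK τ n = upK τ' n) by (intros [|m]; simpl; auto; rewrite H3; auto).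
    rewrite E1, E2. f_equal. f_equal. apply IHM.
    + intros; unfold upNs; rewrite H1; auto.
    + intros [|m]; simpl; auto.
    + auto.
Qed.

Definition idf : nat -> nat := fun n => n.
Definition nilK : nat -> list term := fun _ => [].
Definition R (ξ θ : nat -> nat) : term -> term := inst (fun x => Var (ξ x)) θ nilK.

Lemma R_ext : forall M ξ ξ' θ θ', (forall x, ξ x = ξ' x) -> (forall n, θ n = θ' n) ->
  R ξ θ M = R ξ' θ' M.
Proof. intros; unfold R; apply inst_ext; intros; try rewrite H; auto. Qed.

Lemma R_var : forall ξ θ x, R ξ θ (Var x) = Var (ξ x).
Proof. reflexivity. Qed.
Lemma R_App : forall ξ θ P Q, R ξ θ (App P Q) = App (R ξ θ P) (R ξ θ Q).
Proof. reflexivity. Qed.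
Lemma R_lam : forall ξ θ P, R ξ θ (Lam P) = Lam (R (upT ξ) θ P).
Proof.
  intros; unfold R; simpl; f_equal; apply inst_ext; auto.
  intros [|x]; reflexivity.
Qed.
Lemma R_mu : forall ξ θ b P, R ξ θ (Mu b P) = Mu (upT θ b) (R ξ (upT θ) P).
Proof.
  intros; unfold R; simpl.
  assert (E : upK nilK b = []) by (destruct b; reflexivity).
  rewrite E; simpl. f_equal. apply inst_ext; auto.
  intros [|m]; reflexivity.
Qed.
Lemma R_apps : forall s ξ θ M, R ξ θ (apps M s) = apps (R ξ θ M) (map (R ξ θ) s).
Proof. intros; unfold R; apply inst_apps. Qed.

Lemma RR : forall M ξ1 θ1 ξ2 θ2,
  R ξ2 θ2 (R ξ1 θ1 M) = R (fun x => ξ2 (ξ1 x)) (fun n => θ2 (θ1 n)) M.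
Proof.
  induction M; intros.
  - reflexivity.
  - rewrite !R_lam, IHM. f_equal. apply R_ext; auto. intros [|x]; reflexivity.
  - rewrite !R_App, IHM1, IHM2; reflexivity.
  - rewrite !R_mu, IHM. f_equal.
    + destruct n; reflexivity.
    + apply R_ext; auto. intros [|x]; reflexivity.
Qed.

Definition shc (c : nat) : nat -> nat := fun x => if c <=? x then S x else x.

Lemma lift_t_R : forall M c, lift_t c M = R (shc c) idf M.
Proof.
  induction M; intros c.
  - simpl. rewrite R_var. unfold shc. destruct (c <=? n); auto.
  - simpl. rewrite R_lam, IHM. f_equal. apply R_ext; auto.
    intros [|x]; unfold shc; simpl; auto. destruct (c <=? x); auto.
  - simpl; rewrite R_App, IHM1, IHM2; auto.
  - simpl. rewrite R_mu, IHM. f_equal.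
    + destruct n; reflexivity.
    + apply R_ext; auto. intros [|x]; reflexivity.
Qed.

Lemma lift_n_R : forall M c, lift_n c M = R idf (shc c) M.
Proof.
  induction M; intros c.
  - reflexivity.
  - simpl. rewrite R_lam, IHM. f_equal. apply R_ext; auto.
    intros [|x]; reflexivity.
  - simpl; rewrite R_App, IHM1, IHM2; auto.
  - simpl. rewrite R_mu, IHM. f_equal.
    + unfold shc; destruct n; simpl; auto. destruct (c <=? n); auto.
    + apply R_ext; auto. intros [|x]; unfold shc; simpl; auto.
      destruct (c <=? x); auto.
Qed.

Lemma R_inst : forall M ξ2 θ2 σ θ τ,
  R ξ2 θ2 (inst σ θ τ M) =
  inst (fun x => R ξ2 θ2 (σ x)) (fun n => θ2 (θ n)) (fun n => map (R ξ2 θ2) (τ n)) M.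
Proof.
  induction M; intros.
  - reflexivity.
  - simpl inst. rewrite R_lam, IHM. f_equal. apply inst_ext; auto.
    + intros [|x]; simpl; auto.
      rewrite !lift_t_R, !RR. apply R_ext; auto.
    + intros n. unfold liftK. rewrite !map_map. apply map_ext. intros a.
      rewrite !lift_t_R, !RR. apply R_ext; auto.
  - simpl inst. rewrite R_App, IHM1, IHM2; auto.
  - simpl inst. rewrite R_mu, R_apps, IHM. f_equal.
    + destruct n; reflexivity.
    + assert (E : forall m, map (R ξ2 (upT θ2)) (upK τ m) = upK (fun n0 => map (R ξ2 θ2) (τ n0)) m).
      { intros [|m]; simpl; auto. rewrite !map_map. apply map_ext. intros a.
        rewrite !lift_n_R, !RR. apply R_ext; auto. }
      rewrite E. f_equal. apply inst_ext; auto.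
      * intros x; unfold upNs. rewrite !lift_n_R, !RR. apply R_ext; auto.
      * intros [|m]; reflexivity.
Qed.

Lemma inst_R : forall M σ θ τ ξ1 θ1,
  inst σ θ τ (R ξ1 θ1 M) =
  inst (fun x => σ (ξ1 x)) (fun n => θ (θ1 n)) (fun n => τ (θ1 n)) M.
Proof.
  induction M; intros.
  - reflexivity.
  - rewrite R_lam. simpl. rewrite IHM. f_equal. apply inst_ext; auto.
    intros [|x]; reflexivity.
  - rewrite R_App. simpl. rewrite IHM1, IHM2; auto.
  - rewrite R_mu. simpl. rewrite IHM.
    assert (E : upK τ (upT θ1 n) = upK (fun n0 => τ (θ1 n0)) n) by (destruct n; reflexivity).
    rewrite E. f_equal.
    + destruct n; reflexivity.
    + f_equal. apply inst_ext; auto.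
      * intros [|m]; reflexivity.
      * intros [|m]; reflexivity.
Qed.

Lemma CT : forall X σ θ τ,
  lift_t 0 (inst σ θ τ X) = inst (upS σ) θ (liftK τ) (lift_t 0 X).
Proof.
  intros. rewrite !lift_t_R, R_inst, inst_R. apply inst_ext; auto.
  - intros x. rewrite <- lift_t_R. reflexivity.
  - intros n. unfold liftK. apply map_ext. intros; rewrite lift_t_R; auto.
Qed.

Lemma CN : forall X σ θ τ,
  lift_n 0 (inst σ θ τ X) = inst (upNs σ) (upT θ) (upK τ) (lift_n 0 X).
Proof.
  intros. rewrite !lift_n_R, R_inst, inst_R. apply inst_ext; auto.
  - intros x. unfold upNs. rewrite <- lift_n_R. reflexivity.
  - intros n. simpl. apply map_ext. intros; rewrite lift_n_R; auto.
Qed.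

Definition compK σ2 θ2 τ2 (θ1 : nat -> nat) (τ1 : nat -> list term) :=
  fun n => map (inst σ2 θ2 τ2) (τ1 n) ++ τ2 (θ1 n).

Lemma upK_comp : forall σ2 θ2 τ2 θ1 τ1 n,
  map (inst (upNs σ2) (upT θ2) (upK τ2)) (upK τ1 n) ++ upK τ2 (upT θ1 n) =
  upK (compK σ2 θ2 τ2 θ1 τ1) n.
Proof.
  intros. destruct n; simpl; auto. unfold compK. rewrite map_app, !map_map.
  f_equal. apply map_ext. intros; rewrite CN; auto.
Qed.

Lemma inst_inst : forall M σ1 θ1 τ1 σ2 θ2 τ2,
  inst σ2 θ2 τ2 (inst σ1 θ1 τ1 M) =
  inst (fun x => inst σ2 θ2 τ2 (σ1 x)) (fun n => θ2 (θ1 n)) (compK σ2 θ2 τ2 θ1 τ1) M.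
Proof.
  induction M; intros.
  - reflexivity.
  - simpl. rewrite IHM. f_equal. apply inst_ext; auto.
    + intros [|x]; simpl; auto. rewrite CT; auto.
    + intros n. unfold compK, liftK. rewrite map_app, !map_map. f_equal.
      apply map_ext; intros; rewrite CT; auto.
  - simpl; rewrite IHM1, IHM2; auto.
  - simpl. rewrite inst_apps, <- apps_app, IHM, upK_comp. f_equal.
    + destruct n; reflexivity.
    + f_equal. apply inst_ext; auto.
      * intros x; unfold upNs; rewrite CN; auto.
      * intros [|m]; reflexivity.
      * intros m; unfold compK at 1; rewrite upK_comp; auto.
Qed.

Lemma inst_id : forall M, inst (fun x => Var x) idf nilK M = M.
Proof.
  induction M.
  - reflexivity.
  - simpl. f_equal. rewrite <- IHM at 2. apply inst_ext; auto.
    intros [|x]; reflexivity.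
  - simpl; f_equal; auto.
  - simpl. assert (E : upK nilK n = []) by (destruct n; reflexivity).
    rewrite E. simpl. f_equal.
    + destruct n; reflexivity.
    + rewrite <- IHM at 2. apply inst_ext; auto; intros [|x]; reflexivity.
Qed.

Lemma R_id : forall M, R idf idf M = M.
Proof. intros; apply inst_id. Qed.

Definition senv (j : nat) (N : term) : nat -> term :=
  fun x => if x =? j then N else if j <? x then Var (pred x) else Var x.
Definition single (a : nat) (N : term) : nat -> list term :=
  fun n => if n =? a then [N] else [].
Arguments single : simpl never.
Arguments senv : simpl never.

Lemma subst_inst : forall M j N, subst j N M = inst (senv j N) idf nilK M.
Proof.
  induction M; intros j N.
  - reflexivity.
  - simpl. rewrite IHM. f_equal. apply inst_ext; auto.
    intros [|x].
    + reflexivity.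
    + unfold senv; simpl upS.
      destruct (Nat.eqb_spec (S x) (S j)); destruct (Nat.eqb_spec x j); try lia; auto.
      destruct (Nat.ltb_spec (S j) (S x)); destruct (Nat.ltb_spec j x); try lia.
      * simpl. destruct x; [lia|]. reflexivity.
      * reflexivity.
  - simpl; rewrite IHM1, IHM2; auto.
  - simpl. rewrite IHM.
    assert (E : upK nilK n = []) by (destruct n; reflexivity).
    rewrite E. simpl. f_equal.
    + destruct n; reflexivity.
    + apply inst_ext.
      * intros x; unfold upNs, senv. destruct (x =? j); auto. destruct (j <? x); auto.
      * intros [|m]; reflexivity.
      * intros [|m]; reflexivity.
Qed.

Lemma ssub_inst : forall M a N, ssub a N M = inst (fun x => Var x) idf (single a N) M.
Proof.
  induction M; intros a N.
  - reflexivity.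
  - simpl. rewrite IHM. f_equal. apply inst_ext; auto.
    + intros [|x]; reflexivity.
    + intros n; unfold liftK, single. destruct (n =? a); auto.
  - simpl; rewrite IHM1, IHM2; auto.
  - simpl. rewrite IHM.
    assert (E : forall m, upK (single a N) m = single (S a) (lift_n 0 N) m).
    { intros [|m]; unfold single; simpl; auto. destruct (m =? a); auto. }
    assert (E2 : inst (upNs (fun x => Var x)) (upT idf) (upK (single a N)) M =
                 inst (fun x => Var x) idf (single (S a) (lift_n 0 N)) M).
    { apply inst_ext; [intros; reflexivity | intros [|x]; reflexivity | exact E]. }
    rewrite E2, E. destruct n as [|m]; unfold single; simpl.
    + reflexivity.
    + destruct (m =? a); reflexivity.
Qed.

Lemma lift_t_inst : forall X, lift_t 0 X = inst (fun x => Var (S x)) idf nilK X.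
Proof. intros; rewrite lift_t_R; unfold R; apply inst_ext; auto. Qed.
Lemma lift_n_inst : forall X, lift_n 0 X = inst (fun x => Var x) S nilK X.
Proof. intros; rewrite lift_n_R; unfold R; apply inst_ext; auto. Qed.

Lemma subst_lift : forall Y N, subst 0 N (lift_t 0 Y) = Y.
Proof.
  intros. rewrite subst_inst, lift_t_inst, inst_inst. rewrite <- (inst_id Y) at 2.
  apply inst_ext; intros; reflexivity.
Qed.

Lemma ssub_lift : forall Y N, ssub 0 N (lift_n 0 Y) = lift_n 0 Y.
Proof.
  intros. rewrite ssub_inst, !lift_n_inst, inst_inst.
  apply inst_ext; intros; reflexivity.
Qed.

Lemma map_ssub_lift : forall l N, map (ssub 0 N) (map (lift_n 0) l) = map (lift_n 0) l.
Proof. intros; rewrite map_map; apply map_ext; intros; apply ssub_lift. Qed.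

Definition scons (N : term) (σ : nat -> term) : nat -> term :=
  fun x => match x with 0 => N | S n => σ n end.

Lemma subst_up : forall M N σ θ τ,
  subst 0 N (inst (upS σ) θ (liftK τ) M) = inst (scons N σ) θ τ M.
Proof.
  intros. rewrite subst_inst, inst_inst. apply inst_ext; auto.
  - intros [|x]; simpl; auto. rewrite <- subst_inst. apply subst_lift.
  - intros n. unfold compK, liftK, nilK. rewrite app_nil_r, map_map.
    rewrite <- (map_id (τ n)) at 2. apply map_ext. intros; rewrite <- subst_inst; apply subst_lift.
Qed.

Lemma ssub_apps : forall s a N M, ssub a N (apps M s) = apps (ssub a N M) (map (ssub a N) s).
Proof.
  intros. rewrite !ssub_inst, inst_apps. f_equal. apply map_ext; intros; rewrite ssub_inst; auto.
Qed.

Lemma KEY : forall P N σ θ τ,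
  ssub 0 (lift_n 0 (inst σ θ τ N)) (inst (upNs σ) (upT θ) (upK τ) P) =
  inst (upNs σ) (upT θ) (upK τ) (ssub 0 (lift_n 0 N) P).
Proof.
  intros. rewrite !ssub_inst, !inst_inst. apply inst_ext; auto.
  - intros x. simpl. unfold upNs. rewrite <- ssub_inst. apply ssub_lift.
  - intros [|m].
    + unfold compK; simpl. rewrite CN. reflexivity.
    + unfold compK; simpl. rewrite app_nil_r. rewrite map_map.
      apply map_ext; intros; rewrite <- ssub_inst; apply ssub_lift.
Qed.

Inductive steps : term -> term -> Prop :=
| steps_refl : forall M, steps M M
| steps_next : forall M N P, step M N -> steps N P -> steps M P.

Lemma steps_trans : forall M N P, steps M N -> steps N P -> steps M P.
Proof. intros M N P H; induction H; intros; eauto using steps_next. Qed.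
Lemma steps_one : forall M N, step M N -> steps M N.
Proof. intros; eauto using steps, steps_refl. Qed.

Lemma steps_map : forall (f : term -> term), (forall M N, step M N -> step (f M) (f N)) ->
  forall M N, steps M N -> steps (f M) (f N).
Proof. intros f Hf M N H; induction H; eauto using steps. Qed.

Lemma step_apps : forall s M M', step M M' -> step (apps M s) (apps M' s).
Proof.
  induction s; intros; simpl; auto. apply IHs. apply step_appl; auto.
Qed.

Lemma steps_apps_r : forall s s' M, Forall2 steps s s' -> steps (apps M s) (apps M s').
Proof.
  intros s s' M H; revert M; induction H; intros M.
  - apply steps_refl.
  - simpl. apply steps_trans with (apps (App M y) l).
    + apply (steps_map (fun z => apps (App M z) l)); auto.
      intros; apply step_apps; apply step_appr; auto.
    + apply IHForall2.
Qed.

Lemma step_inst : forall M M', step M M' -> forall σ θ τ, step (inst σ θ τ M) (inst σ θ τ M').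
Proof.
  intros M M' H; induction H; intros σ θ τ.
  - simpl. replace (inst σ θ τ (subst 0 N M)) with
      (subst 0 (inst σ θ τ N) (inst (upS σ) θ (liftK τ) M)) by
      (rewrite subst_up, subst_inst, inst_inst; apply inst_ext; intros [|?]; reflexivity).
    apply step_beta.
  - simpl. destruct b as [|b].
    + simpl. unfold N', P'. simpl.
      pose proof (step_mu 0 (inst (upNs σ) (upT θ) (upK τ) P) (inst σ θ τ N)) as Hs.
      cbv zeta in Hs. simpl in Hs. unfold P', N'. rewrite <- KEY, <- CN. exact Hs.
    + simpl. unfold N', P'. simpl.
      pose proof (step_mu (S (θ b)) (apps (inst (upNs σ) (upT θ) (upK τ) P) (map (lift_n 0) (τ b))) (inst σ θ τ N)) as Hs.
      cbv zeta in Hs. simpl in Hs. rewrite ssub_apps, map_ssub_lift, KEY in Hs. unfold P', N'. exact Hs.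
  - simpl. apply step_lam; auto.
  - simpl. apply step_appl; auto.
  - simpl. apply step_appr; auto.
  - simpl. apply step_mu_body. apply step_apps; auto.
Qed.

Lemma steps_inst : forall M M' σ θ τ, steps M M' -> steps (inst σ θ τ M) (inst σ θ τ M').
Proof. intros. apply (steps_map (inst σ θ τ)); auto. intros; apply step_inst; auto. Qed.

Lemma Forall2_map_steps : forall f, (forall M N, steps M N -> steps (f M) (f N)) ->
  forall l l', Forall2 steps l l' -> Forall2 steps (map f l) (map f l').
Proof. intros f Hf l l' H; induction H; simpl; constructor; auto. Qed.

Lemma inst_env_steps : forall M σ σ' θ τ τ',
  (forall x, steps (σ x) (σ' x)) -> (forall n, Forall2 steps (τ n) (τ' n)) ->
  steps (inst σ θ τ M) (inst σ' θ τ' M).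
Proof.
  induction M; intros σ σ' θ τ τ' H1 H2; simpl.
  - auto.
  - apply (steps_map Lam). { intros; apply step_lam; auto. }
    apply IHM.
    + intros [|x]; simpl. apply steps_refl.
      rewrite !lift_t_inst. apply steps_inst; auto.
    + intros n. unfold liftK. apply Forall2_map_steps; auto.
      intros; rewrite !lift_t_inst; apply steps_inst; auto.
  - apply steps_trans with (App (inst σ' θ τ' M1) (inst σ θ τ M2)).
    + apply (steps_map (fun z => App z _)); auto. intros; apply step_appl; auto.
    + apply (steps_map (fun z => App _ z)); auto. intros; apply step_appr; auto.
  - apply (steps_map (Mu _)). { intros; apply step_mu_body; auto. }
    assert (HK : forall m, Forall2 steps (upK τ m) (upK τ' m)).
    { intros [|m]; simpl; auto. apply Forall2_map_steps; auto.
      intros; rewrite !lift_n_inst; apply steps_inst; auto. }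
    apply steps_trans with (apps (inst (upNs σ') (upT θ) (upK τ') M) (upK τ n)).
    + apply (steps_map (fun z => apps z _)). { intros; apply step_apps; auto. }
      apply IHM; auto. intros x; unfold upNs; rewrite !lift_n_inst; apply steps_inst; auto.
    + apply steps_apps_r; auto.
Qed.

Inductive lstep : list term -> list term -> Prop :=
| ls_here : forall x x' l, step x x' -> lstep (x :: l) (x' :: l)
| ls_there : forall x l l', lstep l l' -> lstep (x :: l) (x :: l').

Definition SNL (s : list term) : Prop := Acc (fun s' s => lstep s s') s.

Lemma SN_step : forall M M', SN M -> step M M' -> SN M'.
Proof. intros M M' H Hs. destruct H as [H]. apply H; auto. Qed.

Lemma SN_steps : forall M M', steps M M' -> SN M -> SN M'.
Proof. intros M M' H; induction H; intros; eauto using SN_step. Qed.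

Lemma lstep_app_l : forall l l' m, lstep l l' -> lstep (l ++ m) (l' ++ m).
Proof. intros l l' m H; induction H; simpl; constructor; auto. Qed.
Lemma lstep_app_r : forall l m m', lstep m m' -> lstep (l ++ m) (l ++ m').
Proof. induction l; intros; simpl; auto. constructor; auto. Qed.
Lemma lstep_length : forall l l', lstep l l' -> length l' = length l.
Proof. intros l l' H; induction H; simpl; auto. Qed.
Lemma lstep_Forall : forall l l', lstep l l' -> Forall SN l -> Forall SN l'.
Proof.
  intros l l' H; induction H; intros HF; inversion HF; subst; constructor; auto.
  eapply SN_step; eauto.
Qed.
Lemma lstep_apps : forall s s' M, lstep s s' -> step (apps M s) (apps M s').
Proof.
  intros s s' M H; revert M; induction H; intros M; simpl.
  - apply step_apps. apply step_appr; auto.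
  - apply IHlstep.
Qed.

Lemma SNL_cons : forall x, SN x -> forall l, SNL l -> SNL (x :: l).
Proof.
  intros x Hx; induction Hx as [x Hx IHx]. intros l Hl.
  induction Hl as [l Hl IHl]. constructor. intros y Hy. inversion Hy; subst.
  - apply IHx; auto. constructor; auto.
  - apply IHl; auto.
Qed.

Lemma Forall_SNL : forall l, Forall SN l -> SNL l.
Proof.
  intros l H; induction H.
  - constructor; intros y Hy; inversion Hy.
  - apply SNL_cons; auto.
Qed.

Lemma apps_nonnil : forall s M, s <> [] -> exists p q, apps M s = App p q.
Proof.
  intros s M H. destruct s as [|x s] using rev_ind; [congruence|].
  rewrite apps_snoc. eauto.
Qed.

Lemma apps_App : forall s p q, exists a b, apps (App p q) s = App a b.
Proof.
  induction s; intros; [simpl; eauto | apply IHs].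
Qed.

Lemma SN_inv_apps : forall s M, SN (apps M s) -> SN M.
Proof.
  intros s M H. remember (apps M s) as t eqn:Et. revert M Et.
  induction H as [t Ht IH]. intros M Et; subst. constructor. intros M' HM.
  eapply IH; [|reflexivity]. apply step_apps; auto.
Qed.

Lemma SN_Mu : forall b Q, SN Q -> SN (Mu b Q).
Proof.
  intros b Q H; induction H as [Q HQ IH]. constructor. intros y Hy.
  inversion Hy; subst. apply IH; auto.
Qed.

Lemma SN_var : forall x, SN (Var x).
Proof. intros; constructor; intros y Hy; inversion Hy. Qed.

Lemma inv_var : forall s x Y, step (apps (Var x) s) Y ->
  exists s', lstep s s' /\ Y = apps (Var x) s'.
Proof.
  intros s x. induction s as [|z s IH] using rev_ind; intros Y H.
  - inversion H.
  - rewrite apps_snoc in H. inversion H; subst.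
    + destruct s using rev_ind; [discriminate|]. rewrite apps_snoc in H1; discriminate.
    + destruct s using rev_ind; [discriminate|]. rewrite apps_snoc in H1; discriminate.
    + destruct (IH _ H3) as [s' [Hs' E]]. subst. exists (s' ++ [z]).
      split; [apply lstep_app_l; auto | rewrite apps_snoc; auto].
    + exists (s ++ [N']). split; [apply lstep_app_r; constructor; auto | rewrite apps_snoc; auto].
Qed.

Lemma SN_apps_var : forall s x, Forall SN s -> SN (apps (Var x) s).
Proof.
  intros s x H. apply Forall_SNL in H. induction H as [s Hs IH].
  constructor. intros y Hy. destruct (inv_var _ _ _ Hy) as [s' [H1 H2]]; subst.
  apply IH; auto.
Qed.

Lemma inv_beta : forall s M N Y, step (apps (App (Lam M) N) s) Y ->
  (exists M', step M M' /\ Y = apps (App (Lam M') N) s) \/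
  (exists N', step N N' /\ Y = apps (App (Lam M) N') s) \/
  (exists s', lstep s s' /\ Y = apps (App (Lam M) N) s') \/
  Y = apps (subst 0 N M) s.
Proof.
  intros s M N. induction s as [|z s IH] using rev_ind; intros Y H.
  - simpl in H. inversion H; subst.
    + right; right; right; reflexivity.
    + inversion H3; subst. left; eexists; split; [eassumption|reflexivity].
    + right; left; exists N'; auto.
  - rewrite apps_snoc in H. inversion H; subst.
    + destruct (apps_App s (Lam M) N) as [p [q E]]. rewrite E in H1; discriminate.
    + destruct (apps_App s (Lam M) N) as [p [q E]]. rewrite E in H1; discriminate.
    + destruct (IH _ H3) as [[M1 [A B]]|[[N1 [A B]]|[[s' [A B]]|B]]]; subst.
      * left; exists M1; rewrite apps_snoc; auto.
      * right; left; exists N1; rewrite apps_snoc; auto.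
      * right; right; left; exists (s' ++ [z]); rewrite apps_snoc; split; auto. apply lstep_app_l; auto.
      * right; right; right; rewrite apps_snoc; auto.
    + right; right; left; exists (s ++ [N']); rewrite apps_snoc; split; auto.
      apply lstep_app_r; constructor; auto.
Qed.

Lemma subst_stepN : forall M N N', step N N' -> steps (subst 0 N M) (subst 0 N' M).
Proof.
  intros. rewrite !subst_inst. apply inst_env_steps.
  - intros [|x]; unfold senv; simpl; [apply steps_one; auto | apply steps_refl].
  - intros; unfold nilK; constructor.
Qed.

Lemma beta_exp : forall N, SN N -> forall M s, SN (apps (subst 0 N M) s) ->
  SN (apps (App (Lam M) N) s).
Proof.
  intros N HN. induction HN as [N HN IHN]. intros M s Ht.
  remember (apps (subst 0 N M) s) as t eqn:Et. revert M s Et.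
  induction Ht as [t Ht IHt]. intros M s Et. subst t.
  constructor. intros Y HY.
  destruct (inv_beta _ _ _ _ HY) as [[M' [A B]]|[[N' [A B]]|[[s' [A B]]|B]]]; subst.
  - eapply IHt; [|reflexivity]. apply step_apps. rewrite !subst_inst. apply step_inst; auto.
  - apply IHN; auto. apply SN_steps with (apps (subst 0 N M) s); [|constructor; auto].
    apply (steps_map (fun z => apps z s)); [intros; apply step_apps; auto|].
    apply subst_stepN; auto.
  - eapply IHt; [|reflexivity]. apply lstep_apps; auto.
  - constructor; auto.
Qed.

Definition mhd (b : nat) (P N : term) : term :=
  if b =? 0 then App (ssub 0 (lift_n 0 N) P) (lift_n 0 N) else ssub 0 (lift_n 0 N) P.

Fixpoint tgt (b : nat) (P : term) (s : list term) : term :=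
  match s with [] => Mu b P | N :: s => tgt b (mhd b P N) s end.

Lemma step_mu' : forall b P N, step (App (Mu b P) N) (Mu b (mhd b P N)).
Proof. intros. exact (step_mu b P N). Qed.

Lemma inv_mu : forall s b P Y, step (apps (Mu b P) s) Y ->
  (exists P', step P P' /\ Y = apps (Mu b P') s) \/
  (exists s', lstep s s' /\ Y = apps (Mu b P) s') \/
  (exists N s'', s = N :: s'' /\ Y = apps (Mu b (mhd b P N)) s'').
Proof.
  intros s b P. induction s as [|z s IH] using rev_ind; intros Y H.
  - simpl in H. inversion H; subst. left; exists M'; auto.
  - rewrite apps_snoc in H. inversion H; subst.
    + exfalso. destruct s as [|t s]; [simpl in H1; discriminate|].
      destruct (apps_App s (Mu b P) t) as [p [q E]]. simpl in H1. rewrite E in H1; discriminate.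
    + destruct s as [|t s]; [|destruct (apps_App s (Mu b P) t) as [p [q E]]; simpl in H1; rewrite E in H1; discriminate].
      simpl in H1. injection H1; intros; subst. right; right. exists z, []. split; auto.
    + destruct (IH _ H3) as [[P' [A B]]|[[s' [A B]]|[N [s'' [A B]]]]]; subst.
      * left; exists P'; rewrite apps_snoc; auto.
      * right; left; exists (s' ++ [z]); rewrite apps_snoc; split; auto. apply lstep_app_l; auto.
      * right; right; exists N, (s'' ++ [z]). rewrite apps_snoc; split; auto.
    + right; left; exists (s ++ [N']); rewrite apps_snoc; split; auto.
      apply lstep_app_r; constructor; auto.
Qed.

Lemma ssub_step : forall P P' N, step P P' -> step (ssub 0 N P) (ssub 0 N P').
Proof. intros; rewrite !ssub_inst; apply step_inst; auto. Qed.

Lemma tgt_step : forall s b P P', step P P' -> step (tgt b P s) (tgt b P' s).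
Proof.
  induction s; intros; simpl.
  - apply step_mu_body; auto.
  - apply IHs. unfold mhd. destruct (b =? 0).
    + apply step_appl. apply ssub_step; auto.
    + apply ssub_step; auto.
Qed.

Lemma tgt_steps : forall s b P P', steps P P' -> steps (tgt b P s) (tgt b P' s).
Proof. intros. apply (steps_map (fun z => tgt b z s)); auto. intros; apply tgt_step; auto. Qed.

Lemma mhd_stepN : forall b P N N', step N N' -> steps (mhd b P N) (mhd b P N').
Proof.
  intros. assert (H1 : steps (lift_n 0 N) (lift_n 0 N')).
  { rewrite !lift_n_inst; apply steps_one; apply step_inst; auto. }
  assert (H2 : steps (ssub 0 (lift_n 0 N) P) (ssub 0 (lift_n 0 N') P)).
  { rewrite !ssub_inst. apply inst_env_steps; [intros; apply steps_refl|].
    intros n; unfold single; destruct (n =? 0); constructor; auto. }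
  unfold mhd. destruct (b =? 0); auto.
  apply steps_trans with (App (ssub 0 (lift_n 0 N') P) (lift_n 0 N)).
  - apply (steps_map (fun z => App z _)); auto; intros; apply step_appl; auto.
  - apply (steps_map (fun z => App _ z)); auto; intros; apply step_appr; auto.
Qed.

Lemma tgt_lstep : forall s s' b P, lstep s s' -> steps (tgt b P s) (tgt b P s').
Proof.
  intros s s' b P H; revert P; induction H; intros P; simpl.
  - apply tgt_steps. apply mhd_stepN; auto.
  - apply IHlstep.
Qed.

Definition Rt := fun y x => step x y.

Lemma steps_ct : forall x y, steps x y -> x = y \/ clos_trans term Rt y x.
Proof.
  intros x y H; induction H; auto.
  right. destruct IHsteps as [E|C].
  - subst. apply t_step; auto.
  - eapply t_trans; eauto. apply t_step; auto.
Qed.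

Lemma mu_exp : forall s, Forall SN s -> forall b P, SN (tgt b P s) -> SN (apps (Mu b P) s).
Proof.
  assert (main : forall t, Acc (clos_trans term Rt) t ->
    forall n s b P, length s = n -> Forall SN s -> tgt b P s = t -> SN (apps (Mu b P) s)).
  { intros t Ht. induction Ht as [t Ht IHt].
    intros n. induction n as [n IHn] using lt_wf_ind.
    intros s b P Hl HF. pose proof (Forall_SNL _ HF) as HS. revert b P Hl HF.
    induction HS as [s Hs IHs]. intros b P Hl HF Et.
    constructor. intros Y HY.
    destruct (inv_mu _ _ _ _ HY) as [[P' [A B]]|[[s' [A B]]|[N [s'' [A B]]]]]; subst.
    - eapply IHt; [|reflexivity|auto|reflexivity]. apply t_step. apply tgt_step; auto.
    - destruct (steps_ct _ _ (tgt_lstep s s' b P A)) as [E|C].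
      + apply (IHs s' A b P); auto.
        * apply lstep_length; auto.
        * eapply lstep_Forall; eauto.
      + eapply IHt; [exact C|reflexivity| |reflexivity]. eapply lstep_Forall; eauto.
    - eapply (IHn (length s'')); [simpl; lia|reflexivity| |reflexivity].
      inversion HF; auto. }
  intros s Hs b P H. eapply main; [apply Acc_clos_trans; exact H|reflexivity|auto|reflexivity].
Qed.

Definition upKL (τ : nat -> list term) (L : list term) : nat -> list term :=
  fun n => match n with 0 => map (lift_n 0) L | S n => map (lift_n 0) (τ n) end.

Definition body σ θ τ L b M :=
  apps (inst (upNs σ) (upT θ) (upKL τ L) M) (upKL τ L b).

Lemma hd_body : forall σ θ τ L b M N,
  mhd (upT θ b) (body σ θ τ L b M) N = body σ θ τ (L ++ [N]) b M.
Proof.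
  intros. unfold body, mhd.
  assert (E : ssub 0 (lift_n 0 N) (inst (upNs σ) (upT θ) (upKL τ L) M) =
              inst (upNs σ) (upT θ) (upKL τ (L ++ [N])) M).
  { rewrite ssub_inst, inst_inst. apply inst_ext.
    - intros x; simpl; unfold upNs; rewrite <- ssub_inst; apply ssub_lift.
    - intros; reflexivity.
    - intros [|m]; unfold compK; simpl.
      + rewrite map_app. unfold single; simpl. f_equal.
        rewrite <- (map_ssub_lift L (lift_n 0 N)) at 2.
        apply map_ext; intros; rewrite ssub_inst; auto.
      + unfold single; simpl. rewrite app_nil_r.
        rewrite <- (map_ssub_lift (τ m) (lift_n 0 N)) at 2.
        apply map_ext; intros; rewrite ssub_inst; auto. }
  destruct b as [|b]; simpl.
  - rewrite ssub_apps, E, map_ssub_lift, <- apps_snoc, map_app. reflexivity.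
  - rewrite ssub_apps, E, map_ssub_lift. reflexivity.
Qed.

Lemma tgt_body : forall s σ θ τ L b M,
  tgt (upT θ b) (body σ θ τ L b M) s = Mu (upT θ b) (body σ θ τ (L ++ s) b M).
Proof.
  induction s; intros; simpl.
  - rewrite app_nil_r; auto.
  - rewrite hd_body, IHs, <- app_assoc. reflexivity.
Qed.

Definition Sw (s : list term) : Prop := forall ξ θ, Forall SN (map (R ξ θ) s).

Fixpoint Dsem (d : dty) (M : term) {struct d} : Prop :=
  match d with
  | Nu => forall ξ θ s, Sw s -> SN (apps (R ξ θ M) s)
  | ArrO => forall ξ θ s, Sw s -> SN (apps (R ξ θ M) s)
  | Arr k => forall ξ θ s, Csem k s -> SN (apps (R ξ θ M) s)
  | DMeet a b => Dsem a M /\ Dsem b M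
  end
with Csem (k : cty) (s : list term) {struct k} : Prop :=
  match k with
  | PairO d => exists N s', s = N :: s' /\ Dsem d N /\ Sw s'
  | Pair d k => exists N s', s = N :: s' /\ Dsem d N /\ Csem k s'
  | CMeet k1 k2 => Csem k1 s /\ Csem k2 s
  end.

Scheme dty_mut := Induction for dty Sort Prop
with cty_mut := Induction for cty Sort Prop.
Combined Scheme ty_mutind from dty_mut, cty_mut.

Lemma Sw_SN : forall s, Sw s -> Forall SN s.
Proof. intros s H. specialize (H idf idf). rewrite <- (map_id s). erewrite map_ext; eauto. intros; symmetry; apply R_id. Qed.

Lemma Sw_R : forall s ξ θ, Sw s -> Sw (map (R ξ θ) s).
Proof.
  intros s ξ θ H ξ' θ'. rewrite map_map. erewrite map_ext; [apply (H (fun x => ξ' (ξ x)) (fun n => θ' (θ n)))|].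
  intros; apply RR.
Qed.

Lemma Sw_vars : forall n, Sw (repeat (Var 0) n).
Proof. intros n ξ θ. induction n; simpl; constructor; auto. apply SN_var. Qed.

Lemma Sw_nil : Sw [].
Proof. intros ξ θ; constructor. Qed.

Lemma props :
  (forall d, (forall M ξ θ, Dsem d M -> Dsem d (R ξ θ M)) /\ (forall M, Dsem d M -> SN M) /\
             (forall x, Dsem d (Var x))) /\
  (forall k, (forall s ξ θ, Csem k s -> Csem k (map (R ξ θ) s)) /\ (forall s, Csem k s -> Forall SN s) /\
             (exists m, forall n, m <= n -> Csem k (repeat (Var 0) n))).
Proof.
  assert (HNu : (forall M ξ θ, (forall ξ θ s, Sw s -> SN (apps (R ξ θ M) s)) ->
                   (forall ξ' θ' s, Sw s -> SN (apps (R ξ' θ' (R ξ θ M)) s))) /\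
                (forall M, (forall ξ θ s, Sw s -> SN (apps (R ξ θ M) s)) -> SN M) /\
                (forall x, forall ξ θ s, Sw s -> SN (apps (R ξ θ (Var x)) s))).
  { split; [|split].
    - intros M ξ θ H ξ' θ' s Hs. rewrite RR; auto.
    - intros M H. specialize (H idf idf [] Sw_nil). simpl in H. rewrite R_id in H; auto.
    - intros x ξ θ s Hs. rewrite R_var. apply SN_apps_var. apply Sw_SN; auto. }
  apply (ty_mutind
    (fun d => (forall M ξ θ, Dsem d M -> Dsem d (R ξ θ M)) /\ (forall M, Dsem d M -> SN M) /\
             (forall x, Dsem d (Var x)))
    (fun k => (forall s ξ θ, Csem k s -> Csem k (map (R ξ θ) s)) /\ (forall s, Csem k s -> Forall SN s) /\
             (exists m, forall n, m <= n -> Csem k (repeat (Var 0) n)))).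
  - exact HNu.
  - exact HNu.
  - intros k [IH1 [IH2 [m IH3]]]. split; [|split].
    + intros M ξ θ H ξ' θ' s Hs. simpl in *. rewrite RR; auto.
    + intros M H. simpl in H. specialize (H idf idf _ (IH3 m (le_n m))).
      apply SN_inv_apps in H. rewrite R_id in H; auto.
    + intros x ξ θ s Hs. simpl. rewrite R_var. apply SN_apps_var. auto.
  - intros a [A1 [A2 A3]] b [B1 [B2 B3]]. split; [|split]; simpl.
    + intros M ξ θ [H1 H2]; split; auto.
    + intros M [H1 H2]; auto.
    + intros x; split; auto.
  - intros d [D1 [D2 D3]]. split; [|split]; simpl.
    + intros s ξ θ [N [s' [E [H1 H2]]]]; subst. exists (R ξ θ N), (map (R ξ θ) s').
      split; auto. split; auto. apply Sw_R; auto.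
    + intros s [N [s' [E [H1 H2]]]]; subst. constructor; auto. apply Sw_SN; auto.
    + exists 1. intros n Hn. destruct n; [lia|]. simpl. exists (Var 0), (repeat (Var 0) n).
      split; auto. split; auto. apply Sw_vars.
  - intros d [D1 [D2 D3]] k [K1 [K2 [m K3]]]. split; [|split]; simpl.
    + intros s ξ θ [N [s' [E [H1 H2]]]]; subst. exists (R ξ θ N), (map (R ξ θ) s').
      split; auto.
    + intros s [N [s' [E [H1 H2]]]]; subst. constructor; auto.
    + exists (S m). intros n Hn. destruct n; [lia|]. simpl. exists (Var 0), (repeat (Var 0) n).
      split; auto. split; auto. apply K3; lia.
  - intros a [A1 [A2 [ma A3]]] b [B1 [B2 [mb B3]]]. split; [|split]; simpl.
    + intros s ξ θ [H1 H2]; split; auto.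
    + intros s [H1 H2]; auto.
    + exists (max ma mb). intros n Hn; split; [apply A3|apply B3]; lia.
Qed.

Lemma D_R : forall d M ξ θ, Dsem d M -> Dsem d (R ξ θ M).
Proof. intros d; apply (proj1 props d). Qed.
Lemma D_SN : forall d M, Dsem d M -> SN M.
Proof. intros d; apply (proj1 props d). Qed.
Lemma D_var : forall d x, Dsem d (Var x).
Proof. intros d; apply (proj1 props d). Qed.
Lemma C_R : forall k s ξ θ, Csem k s -> Csem k (map (R ξ θ) s).
Proof. intros k; apply (proj2 props k). Qed.
Lemma C_SN : forall k s, Csem k s -> Forall SN s.
Proof. intros k; apply (proj2 props k). Qed.

Scheme dle_mut := Induction for dle Sort Prop
with cle_mut := Induction for cle Sort Prop.
Combined Scheme le_mutind from dle_mut, cle_mut.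

Lemma sub_sound :
  (forall d1 d2, dle d1 d2 -> forall M, Dsem d1 M -> Dsem d2 M) /\
  (forall k1 k2, cle k1 k2 -> forall s, Csem k1 s -> Csem k2 s).
Proof.
  - apply (le_mutind (fun d1 d2 _ => forall M, Dsem d1 M -> Dsem d2 M)
                   (fun k1 k2 _ => forall s, Csem k1 s -> Csem k2 s)); simpl; intros; try tauto; eauto.
    1: { destruct H as [N [s' [E [H1 H2]]]]; subst. destruct H2 as [N2 [s'' [E [H3 H4]]]]; subst.
      exists N, (N2 :: s''). split; auto. split; auto.
      intros ξ θ. simpl. constructor; auto. apply (D_SN d2). apply D_R; auto. }
    all: repeat match goal with H : exists _, _ |- _ => destruct H | H : _ /\ _ |- _ => destruct H end;
        subst; try (match goal with H : _ :: _ = _ :: _ |- _ => injection H; intros; subst end);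
        eexists; eexists; split; [reflexivity| ]; auto.
Qed.

Definition GoodS G σ := forall x e, nth_error G x = Some e -> Dsem e (σ x).
Definition GoodK D τ := forall n k, nth_error D n = Some k -> Csem k (τ n) \/ τ n = [].

Lemma GoodS_R : forall G σ ξ θ, GoodS G σ -> GoodS G (fun x => R ξ θ (σ x)).
Proof. intros G σ ξ θ H x e He. apply D_R; eauto. Qed.
Lemma GoodK_R : forall D τ ξ θ, GoodK D τ -> GoodK D (fun n => map (R ξ θ) (τ n)).
Proof.
  intros D τ ξ θ H n k Hk. destruct (H n k Hk) as [A|A].
  - left; apply C_R; auto.
  - right; rewrite A; reflexivity.
Qed.

Lemma mu_case : forall G D k M b σ θ τ,
  GoodS G σ -> GoodK D τ ->
  (forall σ θ τ, GoodS G σ -> GoodK (k :: D) τ -> Dsem (Arr (match b with 0 => k | S b' => match nth_error D b' with Some k' => k' | None => k end end)) (inst σ θ τ M)) ->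
  (match b with 0 => True | S b' => exists k', nth_error D b' = Some k' end) ->
  Dsem (Arr k) (inst σ θ τ (Mu b M)).
Proof.
  intros G D k M b σ θ τ HS HK IH Hb.
  hnf. intros ξ2 θ2 s Hs. rewrite R_inst.
  set (σ'' := fun x => R ξ2 θ2 (σ x)). set (θ'' := fun n => θ2 (θ n)).
  set (τ'' := fun n => map (R ξ2 θ2) (τ n)).
  assert (HS'' : GoodS G σ'') by (apply GoodS_R; auto).
  assert (HK'' : GoodK D τ'') by (apply GoodK_R; auto).
  assert (E : inst σ'' θ'' τ'' (Mu b M) = Mu (upT θ'' b) (body σ'' θ'' τ'' [] b M)).
  { unfold body. change (inst σ'' θ'' τ'' (Mu b M)) with
      (Mu (upT θ'' b) (apps (inst (upNs σ'') (upT θ'') (upK τ'') M) (upK τ'' b))).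
    assert (E1 : upK τ'' b = upKL τ'' [] b) by (destruct b; reflexivity).
    reflexivity. }
  rewrite E. apply mu_exp; [eapply C_SN; eauto|].
  rewrite tgt_body. apply SN_Mu. unfold body. simpl app.
  assert (G1 : GoodS G (upNs σ'')).
  { intros x e He. unfold upNs. rewrite lift_n_R. apply D_R. apply HS''; auto. }
  assert (G2 : GoodK (k :: D) (upKL τ'' s)).
  { intros [|m] k0 Hk; simpl in Hk.
    - injection Hk; intros; subst. left. simpl. rewrite (map_ext _ _ (fun X => lift_n_R X 0)). apply C_R; auto.
    - destruct (HK'' m k0 Hk) as [A|A].
      + left. simpl. rewrite (map_ext _ _ (fun X => lift_n_R X 0)). apply C_R; auto.
      + right. simpl. rewrite A. reflexivity. }
  specialize (IH _ (upT θ'') _ G1 G2).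
  destruct b as [|b].
  - simpl upKL. simpl in IH. specialize (IH idf idf (map (lift_n 0) s)).
    rewrite R_id in IH. apply IH. rewrite (map_ext _ _ (fun X => lift_n_R X 0)). apply C_R; auto.
  - destruct Hb as [k' Hk']. rewrite Hk' in IH. simpl upKL.
    destruct (HK'' b k' Hk') as [A|A].
    + specialize (IH idf idf (map (lift_n 0) (τ'' b))). rewrite R_id in IH. apply IH.
      rewrite (map_ext _ _ (fun X => lift_n_R X 0)). apply C_R; auto.
    + rewrite A. simpl. eapply D_SN; eauto.
Qed.

Lemma sound : forall G M d D, typed G M d D ->
  forall σ θ τ, GoodS G σ -> GoodK D τ -> Dsem d (inst σ θ τ M).
Proof.
  intros G M d D H; induction H; intros σ θ τ HS HK.
  - simpl. apply HS; auto.
  - hnf. intros ξ2 θ2 s Hs. rewrite R_inst.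
    destruct Hs as [N [s' [E [H1 H2]]]]; subst.
    set (σ'' := fun x => R ξ2 θ2 (σ x)). set (θ'' := fun n => θ2 (θ n)).
    set (τ'' := fun n => map (R ξ2 θ2) (τ n)).
    change (SN (apps (App (Lam (inst (upS σ'') θ'' (liftK τ'') M)) N) s')).
    apply beta_exp; [eapply D_SN; eauto|]. rewrite subst_up.
    assert (IH := IHtyped (scons N σ'') θ'' τ'').
    assert (G1 : GoodS (d :: G) (scons N σ'')).
    { intros [|x] e He; simpl in He.
      - injection He; intros; subst; auto.
      - exact (GoodS_R G σ ξ2 θ2 HS x e He). }
    specialize (IH G1 (GoodK_R _ _ _ _ HK)). simpl in IH.
    specialize (IH idf idf s' H2). rewrite R_id in IH. exact IH.
  - hnf. intros ξ2 θ2 s Hs. rewrite R_inst.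
    destruct Hs as [N [s' [E [H1 H2]]]]; subst.
    set (σ'' := fun x => R ξ2 θ2 (σ x)). set (θ'' := fun n => θ2 (θ n)).
    set (τ'' := fun n => map (R ξ2 θ2) (τ n)).
    change (SN (apps (App (Lam (inst (upS σ'') θ'' (liftK τ'') M)) N) s')).
    apply beta_exp; [eapply D_SN; eauto|]. rewrite subst_up.
    assert (IH := IHtyped (scons N σ'') θ'' τ'').
    assert (G1 : GoodS (d :: G) (scons N σ'')).
    { intros [|x] e He; simpl in He.
      - injection He; intros; subst; auto.
      - exact (GoodS_R G σ ξ2 θ2 HS x e He). }
    specialize (IH G1 (GoodK_R _ _ _ _ HK)). simpl in IH.
    specialize (IH idf idf s' H2). rewrite R_id in IH. exact IH.
  - hnf. intros ξ2 θ2 s Hs. simpl inst. rewrite R_App.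
    change (SN (apps (R ξ2 θ2 (inst σ θ τ M)) (R ξ2 θ2 (inst σ θ τ N) :: s))).
    apply (IHtyped1 σ θ τ HS HK). exists (R ξ2 θ2 (inst σ θ τ N)), s. split; auto.
    split; auto. apply D_R; auto.
  - hnf. intros ξ2 θ2 s Hs. simpl inst. rewrite R_App.
    change (SN (apps (R ξ2 θ2 (inst σ θ τ M)) (R ξ2 θ2 (inst σ θ τ N) :: s))).
    apply (IHtyped1 σ θ τ HS HK). exists (R ξ2 θ2 (inst σ θ τ N)), s. split; auto.
    split; auto. apply D_R; auto.
  - apply (mu_case G D k M (S b)); auto.
    + intros. rewrite H. apply IHtyped; auto.
    + eauto.
  - apply (mu_case G D k M 0); auto.
  - apply (proj1 sub_sound d d'); auto.
  - simpl; split; auto.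
Qed.

Theorem mainTheorem1 :
  forall (M : term) (G : list dty) (d : dty) (D : list cty),
    typed G M d D -> SN M.
Proof.
  intros M G d D H.
  assert (A := sound G M d D H (fun x => Var x) idf nilK).
  rewrite inst_id in A. apply (D_SN d). apply A.
  - intros x e _. apply D_var.
  - intros n k _. right; reflexivity.
Qed.
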